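(* Let $T$ be a finite tree. Then $T$ is $\mathbb{Z}_2^2$-cordial if and only if $T$ is not isomorphic to $P_4$ or $P_5$. Equivalently: every finite tree other than $P_4$ and $P_5$ is $\mathbb{Z}_2^2$-cordial (and $P_4$, $P_5$ are not).
   Context: Graphs are finite, simple and undirected. $\mathbb{Z}_2^2=\mathbb{Z}_2\times\mathbb{Z}_2$ is the Klein four-group. For an abelian group $A$ and a graph $G=(V,E)$, a vertex labeling $\ell:V\to A$ induces an edge labeling $\ell(\{v_1,v_2\})=\ell(v_1)+\ell(v_2)$. Let $f_V(a)=|\{v\in V:\ell(v)=a\}|$ and $f_E(a)=|\{e\in E:\ell(e)=a\}|$. The labeling is $A$-cordial if $|f_V(a_1)-f_V(a_2)|\le 1$ and $|f_E(a_1)-f_E(a_2)|\le 1$ for all $a_1,a_2\in A$; $G$ is $A$-cordial if it admits an $A$-cordial labeling. $P_n$ denotes the path on $n$ vertices. *)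

(* Defs.v *)
From mathcomp Require Import all_boot all_algebra.
Set Implicit Arguments. Unset Strict Implicit. Unset Printing Implicit Defensive.
Import GRing.Theory.
Local Open Scope ring_scope.

(* A finite simple graph: vertex type T : finType, adjacency e : rel T,
   assumed symmetric and irreflexive. *)

Definition edges (T : finType) (e : rel T) : {set {set T}} :=
  [set E : {set T} | [exists x, exists y, e x y && (E == [set x; y])]].

Definition connected_graph (T : finType) (e : rel T) : Prop :=
  forall x y : T, connect e x y.

Definition acyclic_graph (T : finType) (e : rel T) : Prop :=
  forall s : seq T, uniq s -> (2 < size s)%N -> ~~ cycle e s.

Definition is_tree (T : finType) (e : rel T) : Prop :=
  [/\ (0 < #|T|)%N, connected_graph e & acyclic_graph e].

Definition fV (T : finType) (A : zmodType) (l : T -> A) (a : A) : nat :=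
  #|[set v : T | l v == a]|.

Definition fE (T : finType) (e : rel T) (A : zmodType) (l : T -> A) (a : A) : nat :=
  #|[set E in edges e |
      [exists x, exists y, [&& e x y, E == [set x; y] & l x + l y == a]]]|.

Definition cordial_labeling (T : finType) (e : rel T) (A : zmodType) (l : T -> A) : Prop :=
  (forall a1 a2 : A, fV l a1 <= fV l a2 + 1)%N /\
  (forall a1 a2 : A, fE e l a1 <= fE e l a2 + 1)%N.

Definition cordial (T : finType) (e : rel T) (A : zmodType) : Prop :=
  exists l : T -> A, cordial_labeling e l.

Notation Klein4 := (('Z_2 * 'Z_2)%type : zmodType).

Definition path_adj (n : nat) : rel 'I_n :=
  fun i j => ((i : nat).+1 == j) || ((j : nat).+1 == i).

Definition iso_path (T : finType) (e : rel T) (n : nat) : Prop :=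
  exists f : T -> 'I_n, bijective f /\ forall x y : T, e x y = path_adj (f x) (f y).

(* Main.v *)
Require Import Defs.
From mathcomp Require Import all_boot all_algebra.
From mathcomp Require Import zify.
From Stdlib Require Import Classical_Prop.
Set Implicit Arguments. Unset Strict Implicit. Unset Printing Implicit Defensive.
Import GRing.Theory.

Local Open Scope ring_scope.

Definition A := Klein4.
Definition k0 : A := (0, 0).
Definition k1 : A := (0, 1).
Definition k2 : A := (1, 0).
Definition k3 : A := (1, 1).
Definition kl : seq A := [:: k0; k1; k2; k3].
Lemma mem_kl (x : A) : x \in kl.
Proof. by case: x => [[[|[|?]] ?] [[|[|?]] ?]]. Qed.
Lemma uniq_kl : uniq kl. Proof. by []. Qed.

Lemma sumA (f : A -> nat) : (\sum_(a : A) f a = f k0 + f k1 + f k2 + f k3)%N.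
Proof.
have pe : perm_eq (index_enum A) kl.
  by apply: uniq_perm; [exact: index_enum_uniq | exact: uniq_kl | move=> x; rewrite mem_index_enum mem_kl].
by rewrite (perm_big _ pe) /= !big_cons big_nil addn0 !addnA.
Qed.

Definition bal (c : A -> nat) := forall a b, (c a <= c b + 1)%N.
Definition balb (c : A -> nat) := all (fun a => all (fun b => c a <= c b + 1)%N kl) kl.
Lemma balP c : balb c -> bal c.
Proof. by move=> /allP H a b; have /allP := H a (mem_kl a); apply; exact: mem_kl. Qed.

Definition vec4 (x0 x1 x2 x3 : nat) (a : A) : nat :=
  if a == k0 then x0 else if a == k1 then x1 else if a == k2 then x2 else x3.
Definition bits := [:: 0%N; 1%N].
Definition chk4 (P : nat -> nat -> nat -> nat -> bool) :=
  all (fun x0 => all (fun x1 => all (fun x2 => all (fun x3 => P x0 x1 x2 x3) bits) bits) bits) bits.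
Lemma chk4P P : chk4 P -> forall x0 x1 x2 x3, x0 \in bits -> x1 \in bits -> x2 \in bits -> x3 \in bits -> P x0 x1 x2 x3.
Proof.
move=> /allP H x0 x1 x2 x3 h0 h1 h2 h3.
by move: (H _ h0) => /allP /(_ _ h1) /allP /(_ _ h2) /allP /(_ _ h3).
Qed.

Lemma decomp (c : A -> nat) N : bal c -> (\sum_(a : A) c a)%N = N ->
  exists m x0 x1 x2 x3, [/\ [&& x0 \in bits, x1 \in bits, x2 \in bits & x3 \in bits],
     (x0 + x1 + x2 + x3 = N %% 4)%N & forall a, c a = (m + vec4 x0 x1 x2 x3 a)%N].
Proof.
move=> hb; rewrite sumA => hN.
set m := minn (minn (c k0) (c k1)) (minn (c k2) (c k3)).
exists m, (c k0 - m)%N, (c k1 - m)%N, (c k2 - m)%N, (c k3 - m)%N.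
have h01 := hb k0 k1; have h02 := hb k0 k2; have h03 := hb k0 k3.
have h10 := hb k1 k0; have h12 := hb k1 k2; have h13 := hb k1 k3.
have h20 := hb k2 k0; have h21 := hb k2 k1; have h23 := hb k2 k3.
have h30 := hb k3 k0; have h31 := hb k3 k1; have h32 := hb k3 k2.
have bP (y : nat) : (y <= 1)%N -> y \in bits by case: y => [|[|]].
split; first by rewrite !bP //; rewrite /m; lia.
- have -> : N = (4 * m + ((c k0 - m) + (c k1 - m) + (c k2 - m) + (c k3 - m)))%N by rewrite /m; lia.
  rewrite mulnC modnMDl modn_small //; rewrite /m; lia.
- move=> a; have := mem_kl a; rewrite /vec4 !inE.
  by case/or4P=> /eqP ->; rewrite ?eqxx //=; lia.
Qed.

Lemma bal_shift (c f g : A -> nat) m : (forall a, c a = m + f a)%N ->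
  bal (fun a => f a + g a)%N -> bal (fun a => c a + g a)%N.
Proof. move=> hc hb a b; rewrite !hc; have := hb a b; lia. Qed.

Fixpoint hasL {X : Type} (p : X -> bool) (s : seq X) : bool :=
  match s with [::] => false | x :: s' => if p x then true else hasL p s' end.
Fixpoint allL {X : Type} (p : X -> bool) (s : seq X) : bool :=
  match s with [::] => true | x :: s' => if p x then allL p s' else false end.
Arguments hasL {X} p s : simpl never.
Arguments allL {X} p s : simpl never.
Lemma hasLP {X : eqType} (p : X -> bool) s : hasL p s -> exists2 x, x \in s & p x.
Proof.
elim: s => // x s IH; rewrite /hasL -/(hasL p s); case: ifP => [px _|_ /IH [y ys py]]; first by exists x; rewrite ?inE ?eqxx.
by exists y; rewrite // inE ys orbT.
Qed.
Lemma allLP {X : eqType} (p : X -> bool) s : allL p s -> forall x, x \in s -> p x.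
Proof.
elim: s => // x s IH; rewrite /allL -/(allL p s); case: ifP => // px /IH H y; rewrite inE => /orP [/eqP ->|]; [exact: px|exact: H].
Qed.
Definition andL (a b : bool) := if a then b else false.
Lemma andLP a b : andL a b -> a /\ b. Proof. by case: a. Qed.
Definition balL (c : A -> nat) := allL (fun a => allL (fun b => c a <= c b + 1)%N kl) kl.
Lemma balLP c : balL c -> bal c.
Proof. by move=> H a b; apply: (allLP (allLP H (mem_kl a))); exact: mem_kl. Qed.
Lemma allLE {X : Type} (p : X -> bool) s : allL p s = all p s.
Proof. by elim: s => // x s IH; rewrite /allL -/(allL p s) IH /=; case: (p x). Qed.
Lemma balLE c : balL c = balb c.
Proof. by rewrite /balL /balb allLE; apply: eq_all => a; rewrite allLE. Qed.
Lemma bal_balL c : bal c -> balL c.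
Proof. by move=> H; rewrite balLE; apply/allP => a _; apply/allP => b _; exact: H. Qed.

Definition pats16 : seq (nat * nat * nat * nat) :=
  [:: (0,0,0,0); (0,0,0,1); (0,0,1,0); (0,0,1,1); (0,1,0,0); (0,1,0,1); (0,1,1,0); (0,1,1,1);
      (1,0,0,0); (1,0,0,1); (1,0,1,0); (1,0,1,1); (1,1,0,0); (1,1,0,1); (1,1,1,0); (1,1,1,1)]%N.
Lemma mem_pats16 x0 x1 x2 x3 : [&& x0 \in bits, x1 \in bits, x2 \in bits & x3 \in bits] ->
  (x0, x1, x2, x3) \in pats16.
Proof. by rewrite !inE; case/and4P => /orP[]/eqP-> /orP[]/eqP-> /orP[]/eqP-> /orP[]/eqP->. Qed.

Definition cntl (xs : seq A) (a : A) : nat := count (fun y => y == a) xs.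
Definition pel (xs : seq A) : seq A :=
  if xs is y :: ys then pairmap (fun u v => (u + v)%R) y ys else [::].
Definition tuplesA (n : nat) : seq (seq A) :=
  iter n (fun acc => flatten [seq [seq x :: t | t <- acc] | x <- kl]) [:: [::]].
Lemma mem_tuplesA (s : seq A) : s \in tuplesA (size s).
Proof.
elim: s => [|x s IH] //; rewrite /tuplesA /= -/(tuplesA (size s)).
have H : forall (u : seq A) (L : seq (seq A)), u \in L -> x :: u \in flatten [seq [seq y :: t | t <- L] | y <- kl].
  move=> u L uL; apply/flattenP.
  exists [seq x :: t | t <- L]; first by apply/mapP; exists x => //; exact: mem_kl.
  by apply/mapP; exists u.
exact: H.
Qed.

Local Close Scope ring_scope.

Definition chkE1 := allL (fun v : nat * nat * nat * nat => let: (v0,v1,v2,v3) := v in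
  allL (fun w : nat * nat * nat * nat => let: (w0,w1,w2,w3) := w in
  if (v0 + v1 + v2 + v3 != 3) && (w0 + w1 + w2 + w3 == (v0 + v1 + v2 + v3 + 3) %% 4) then
  allL (fun q => hasL (fun x => andL (balL (fun a => vec4 v0 v1 v2 v3 a + (x == a)))
                              (balL (fun a => vec4 w0 w1 w2 w3 a + ((x + q)%R == a)))) kl) kl
  else true) pats16) pats16.
Lemma chkE1_ok : chkE1. Proof. by vm_compute. Qed.

Definition chkE3 := allL (fun v : nat * nat * nat * nat => let: (v0,v1,v2,v3) := v in
  allL (fun w : nat * nat * nat * nat => let: (w0,w1,w2,w3) := w in
  if (v0 + v1 + v2 + v3 == 1) && (w0 + w1 + w2 + w3 == 0) then
  allL (fun q1 => allL (fun q2 => allL (fun q3 =>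
  hasL (fun x1 => hasL (fun x2 => hasL (fun x3 =>
     andL (balL (fun a => vec4 v0 v1 v2 v3 a + (x1 == a) + (x2 == a) + (x3 == a)))
     (balL (fun a => vec4 w0 w1 w2 w3 a + ((x1 + q1)%R == a) + ((x2 + q2)%R == a) + ((x3 + q3)%R == a))))
   kl) kl) kl) kl) kl) kl
  else true) pats16) pats16.
Lemma chkE3_ok : chkE3. Proof. by vm_compute. Qed.

Definition chkE5 := allL (fun v : nat * nat * nat * nat => let: (v0,v1,v2,v3) := v in
  allL (fun w : nat * nat * nat * nat => let: (w0,w1,w2,w3) := w in
  if (v0 + v1 + v2 + v3 == 3) && (w0 + w1 + w2 + w3 == 2) then
  allL (fun q =>
  hasL (fun x1 => hasL (fun x2 => hasL (fun x3 => hasL (fun x4 => hasL (fun x5 =>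
     andL (balL (fun a => vec4 v0 v1 v2 v3 a + (x1 == a) + (x2 == a) + (x3 == a) + (x4 == a) + (x5 == a)))
     (balL (fun a => vec4 w0 w1 w2 w3 a + ((x1 + x2)%R == a) + ((x2 + x3)%R == a) + ((x3 + x4)%R == a)
                    + ((x4 + x5)%R == a) + ((x5 + q)%R == a))))
   kl) kl) kl) kl) kl) kl
  else true) pats16) pats16.
Lemma chkE5_ok : chkE5. Proof. by vm_compute. Qed.

Definition kn (n : nat) : A := nth k0 kl n.
Definition idx5 := [:: 0; 1; 2; 3; 4].
Definition chkF5 := allL (fun i =>
  hasL (fun Ls => hasL (fun x =>
    andL (balL (fun a => cntl Ls a + (x == a)))
         (balL (fun a => cntl (pel Ls) a + ((x + nth k0 Ls i)%R == a)))) kl)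
   [:: map kn [:: 0; 1; 1; 2]]) [:: 1; 2].
Lemma chkF5_ok : chkF5. Proof. by vm_compute. Qed.
Definition chkF6 := allL (fun i =>
  hasL (fun Ls => hasL (fun x =>
    andL (balL (fun a => cntl Ls a + (x == a)))
         (balL (fun a => cntl (pel Ls) a + ((x + nth k0 Ls i)%R == a)))) kl)
   [:: map kn [:: 0; 1; 1; 2; 0]]) idx5.
Lemma chkF6_ok : chkF6. Proof. by vm_compute. Qed.
Definition chkF8 := allL (fun i1 => allL (fun i2 => allL (fun i3 =>
  hasL (fun Ls => hasL (fun x1 => hasL (fun x2 => hasL (fun x3 =>
    andL (balL (fun a => cntl Ls a + (x1 == a) + (x2 == a) + (x3 == a)))
         (balL (fun a => cntl (pel Ls) a + ((x1 + nth k0 Ls i1)%R == a) + ((x2 + nth k0 Ls i2)%R == a)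
              + ((x3 + nth k0 Ls i3)%R == a)))) kl) kl) kl)
   [:: map kn [:: 0; 0; 1; 1; 2]; map kn [:: 0; 1; 1; 2; 2]; map kn [:: 0; 1; 1; 2; 3];
       map kn [:: 0; 1; 2; 2; 3]]) idx5) idx5) idx5.
Lemma chkF8_ok : chkF8. Proof. by vm_compute. Qed.
Definition chkNP n := allL (fun Ls => if balL (cntl Ls) then ~~ balL (cntl (pel Ls)) else true) (tuplesA n).
Lemma chkNP4_ok : chkNP 4. Proof. by vm_compute. Qed.
Lemma chkNP5_ok : chkNP 5. Proof. by vm_compute. Qed.


Lemma modpred N : 0 < N -> N.-1 %% 4 = (N %% 4 + 3) %% 4.
Proof. move=> hN; lia. Qed.

Lemma E1 (cv ce : A -> nat) N : bal cv -> bal ce -> \sum_(a : A) cv a = N ->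
  \sum_(a : A) ce a = N.-1 -> 0 < N -> N %% 4 != 3 -> forall q : A,
  exists x : A, bal (fun a => cv a + (x == a)) /\ bal (fun a => ce a + ((x + q)%R == a)).
Proof.
move=> bv be sv se hN h3 q.
have [m [v0 [v1 [v2 [v3 [hv sv' ev]]]]]] := decomp bv sv.
have [m' [w0 [w1 [w2 [w3 [hw sw' ew]]]]]] := decomp be se.
have := allLP chkE1_ok (mem_pats16 hv) => /= /allLP /(_ _ (mem_pats16 hw)) /=.
rewrite sv' sw' h3 modpred // eqxx /= => /allLP /(_ q (mem_kl q)) /hasLP [x _ /andLP [b1 b2]].
exists x; split; [exact: bal_shift ev (balLP b1) | exact: bal_shift ew (balLP b2)].
Qed.

Lemma bal_ext (f g : A -> nat) : (forall a, f a = g a) -> bal g -> bal f.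
Proof. by move=> H hb a b; rewrite !H. Qed.

Lemma bal_add m (h1 h2 : A -> nat) : (forall a, h2 a = m + h1 a) -> bal h1 -> bal h2.
Proof. move=> H hb a b; rewrite !H; have := hb a b; lia. Qed.

Lemma E3 (cv ce : A -> nat) N : bal cv -> bal ce -> \sum_(a : A) cv a = N ->
  \sum_(a : A) ce a = N.-1 -> N %% 4 = 1 -> forall q1 q2 q3 : A,
  exists x1 x2 x3 : A, bal (fun a => cv a + (x1 == a) + (x2 == a) + (x3 == a)) /\
     bal (fun a => ce a + ((x1 + q1)%R == a) + ((x2 + q2)%R == a) + ((x3 + q3)%R == a)).
Proof.
move=> bv be sv se h1 q1 q2 q3.
have hN : 0 < N by case: N h1 {sv se}.
have [m [v0 [v1 [v2 [v3 [hv sv' ev]]]]]] := decomp bv sv.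
have [m' [w0 [w1 [w2 [w3 [hw sw' ew]]]]]] := decomp be se.
have := allLP chkE3_ok (mem_pats16 hv) => /= /allLP /(_ _ (mem_pats16 hw)) /=.
rewrite sv' sw' modpred // h1 /= => /allLP /(_ q1 (mem_kl _)) /allLP /(_ q2 (mem_kl _))
  /allLP /(_ q3 (mem_kl _)) /hasLP [x1 _ /hasLP [x2 _ /hasLP [x3 _ /andLP [b1 b2]]]].
exists x1, x2, x3; split.
- by apply: (@bal_add m _ _ _ (balLP b1)) => a; rewrite ev !addnA.
- by apply: (@bal_add m' _ _ _ (balLP b2)) => a; rewrite ew !addnA.
Qed.

Lemma perm5 (m v n1 n2 n3 n4 n5 : nat) :
  m + v + n5 + n4 + n3 + n2 + n1 = m + (v + n1 + n2 + n3 + n4 + n5).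
Proof. lia. Qed.

Lemma E5 (cv ce : A -> nat) N : bal cv -> bal ce -> \sum_(a : A) cv a = N ->
  \sum_(a : A) ce a = N.-1 -> N %% 4 = 3 -> forall q : A,
  exists y1 y2 y3 y4 y5 : A,
     bal (fun a => cv a + (y5 == a) + (y4 == a) + (y3 == a) + (y2 == a) + (y1 == a)) /\
     bal (fun a => ce a + ((y5 + q)%R == a) + ((y4 + y5)%R == a) + ((y3 + y4)%R == a)
                    + ((y2 + y3)%R == a) + ((y1 + y2)%R == a)).
Proof.
move=> bv be sv se h3 q.
have hN : 0 < N by case: N h3 {sv se}.
have [m [v0 [v1 [v2 [v3 [hv sv' ev]]]]]] := decomp bv sv.
have [m' [w0 [w1 [w2 [w3 [hw sw' ew]]]]]] := decomp be se.
have := allLP chkE5_ok (mem_pats16 hv) => /= /allLP /(_ _ (mem_pats16 hw)) /=.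
rewrite sv' sw' modpred // h3 /= => /allLP /(_ q (mem_kl _))
  /hasLP [x1 _ /hasLP [x2 _ /hasLP [x3 _ /hasLP [x4 _ /hasLP [x5 _ /andLP [b1 b2]]]]]].
exists x1, x2, x3, x4, x5; split.
- apply: (@bal_add m _ _ _ (balLP b1)) => a; rewrite ev.
  exact: perm5.
- apply: (@bal_add m' _ _ _ (balLP b2)) => a; rewrite ew.
  exact: perm5.
Qed.

Lemma F56 n i : ((n == 4) && ((i == 1) || (i == 2))) || ((n == 5) && (i < 5)) ->
  exists (Ls : seq A) (x : A), [/\ size Ls = n, bal (fun a => cntl Ls a + (x == a)) &
         bal (fun a => cntl (pel Ls) a + ((x + nth k0 Ls i)%R == a))].
Proof.
case/orP => /andP [/eqP -> hi].
- have : i \in [:: 1; 2] by rewrite !inE.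
  move/(allLP chkF5_ok) => /hasLP [Ls]; rewrite inE => /eqP -> /hasLP [x _ /andLP [b1 b2]].
  by exists (map kn [:: 0; 1; 1; 2]), x; split => //; apply: balLP.
- have : i \in idx5 by rewrite !inE; move: hi; case: i => [|[|[|[|[|]]]]].
  move/(allLP chkF6_ok) => /hasLP [Ls]; rewrite inE => /eqP -> /hasLP [x _ /andLP [b1 b2]].
  by exists (map kn [:: 0; 1; 1; 2; 0]), x; split => //; apply: balLP.
Qed.

Lemma F8 i1 i2 i3 : i1 < 5 -> i2 < 5 -> i3 < 5 ->
  exists (Ls : seq A) (x1 x2 x3 : A), [/\ size Ls = 5,
    bal (fun a => cntl Ls a + (x1 == a) + (x2 == a) + (x3 == a)) &
    bal (fun a => cntl (pel Ls) a + ((x1 + nth k0 Ls i1)%R == a) + ((x2 + nth k0 Ls i2)%R == a)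
              + ((x3 + nth k0 Ls i3)%R == a))].
Proof.
have hi (i : nat) : i < 5 -> i \in idx5 by rewrite !inE; case: i => [|[|[|[|[|]]]]].
move=> /hi h1 /hi h2 /hi h3.
move: (allLP (allLP (allLP chkF8_ok h1) h2) h3) => /hasLP [Ls hLs /hasLP [x1 _ /hasLP [x2 _ /hasLP [x3 _ /andLP [b1 b2]]]]].
exists Ls, x1, x2, x3; split; try by apply: balLP.
by move: hLs; rewrite !inE => /or4P [] /eqP ->.
Qed.

Lemma NP n (Ls : seq A) : (n == 4) || (n == 5) -> size Ls = n ->
  bal (cntl Ls) -> bal (cntl (pel Ls)) -> False.
Proof.
move=> hn hs /bal_balL b1 /bal_balL b2.
have : chkNP n by case/orP: hn => /eqP ->; [exact: chkNP4_ok | exact: chkNP5_ok].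
move/allLP => /(_ Ls); rewrite -hs mem_tuplesA => /(_ isT); by rewrite b1 b2.
Qed.


Section Graph.
Variable T : finType.
Variable e : rel T.
Hypothesis eS : symmetric e.
Hypothesis eirr : irreflexive e.
Hypothesis acyc : acyclic_graph e.

Definition eU (U : {set T}) : rel T := fun x y => [&& x \in U, y \in U & e x y].
Definition connU (U : {set T}) := forall x y, x \in U -> y \in U -> connect (eU U) x y.
Definition nb (U : {set T}) x := [set y in U | e x y].
Definition leaf (U : {set T}) v := (v \in U) && (#|nb U v| == 1).

Lemma leafE U v : leaf U v -> exists w, [/\ nb U v = [set w], w \in U, e v w & w != v].
Proof.
case/andP=> vU /cards1P [w hw]; exists w.
have : w \in nb U v by rewrite hw set11.
rewrite inE => /andP [wU evw]; split => //.
by apply: contraTneq evw => ->; rewrite eirr.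
Qed.

Lemma nb_eq U v w y : nb U v = [set w] -> y \in U -> e v y = (y == w).
Proof. by move=> h yU; have := congr1 (fun S : {set T} => y \in S) h; rewrite /= !inE yU. Qed.

Lemma eU_path (U U' : {set T}) x p : path (eU U) x p -> all (fun y => y \in U') (x :: p) -> path (eU U') x p.
Proof.
elim: p x => //= y p IH x /andP [/and3P [_ _ exy] hp] /and3P [xU yU hall].
by rewrite /eU xU yU exy /=; apply: IH => //=; rewrite yU.
Qed.

Lemma eU_path_in U x p : path (eU U) x p -> all (fun y => y \in U) p.
Proof. by elim: p x => //= y p IH x /andP [/and3P [_ yU _] /IH ->]; rewrite yU. Qed.

Lemma eU_e U : subrel (eU U) e.
Proof. by move=> x y /and3P []. Qed.

Lemma leaf_conn U v : connU U -> leaf U v -> connU (U :\ v).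
Proof.
move=> hc /andP [vU1 hl]; have [w [hw wU evw wv]] := leafE (introT andP (conj vU1 hl)).
move=> x y; rewrite !inE => /andP [xv xU] /andP [yv yU].
have /connectP [p pp yl] := hc x y xU yU.
move: yv; rewrite yl => {yl yU y}; case/shortenP: pp => p' pp' up' _ yv.
have vp : v \notin p'.
  apply/negP => vin; move: pp' up' yv; case/splitPr: vin => p1 p2.
  rewrite cat_path /= last_cat /= => /andP [_ /andP [/and3P [aU _ eav] pb]] up.
  case: p2 pb up => [|b p2] /=; first by rewrite eqxx.
  move=> /andP [/and3P [_ bU evb] _] up _.
  have ha : last x p1 = w by apply/eqP; rewrite -(nb_eq hw aU) eS.
  have hb : b = w by apply/eqP; rewrite -(nb_eq hw bU).
  have up' : uniq ((x :: p1) ++ [:: v, b & p2]) by exact: up.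
  move: up'; rewrite cat_uniq => /and3P [_ /hasPn H _].
  have bin : b \in [:: v, b & p2] by rewrite !inE eqxx orbT.
  by move: (H b bin); rewrite hb -ha mem_last.
apply/connectP; exists p' => //.
refine (eU_path pp' _).
rewrite /= !inE xv xU /=; apply/allP => z zp.
rewrite !inE (allP (eU_path_in pp') z zp) andbT.
by apply: contraNneq vp => <-.
Qed.

Lemma max_path U : forall k x p, #|T| - size p <= k -> path (eU U) x p -> uniq (x :: p) ->
  exists p', [/\ path (eU U) x (p ++ p'), uniq (x :: p ++ p') &
     forall z, eU U (last x (p ++ p')) z -> z \in x :: p ++ p'].
Proof.
elim=> [|k IH] x p hk pp up.
all: case: (pickP (fun z => eU U (last x p) z && (z \notin x :: p))) => [z /andP [ez zn]|H];
  last first.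
- exists [::]; rewrite cats0; split => // z ez; apply/negPn/negP => zn.
  by have := H z; rewrite ez zn.
- have hs : size (x :: p) <= #|T| by rewrite -(card_uniqP up) max_card.
  by move: hk hs => /=; lia.
- exists [::]; rewrite cats0; split => // z ez; apply/negPn/negP => zn.
  by have := H z; rewrite ez zn.
- have hs : size (x :: p) <= #|T| by rewrite -(card_uniqP up) max_card.
  have [|||p'' [h1 h2 h3]] := IH x (rcons p z).
  + by rewrite size_rcons; move: hk hs => /=; lia.
  + by rewrite rcons_path pp ez.
  + by rewrite -rcons_cons rcons_uniq zn up.
  by exists (z :: p''); rewrite -cat_rcons.
Qed.

Lemma path_suffix (r : rel T) x s r1 y r2 : x :: s = r1 ++ y :: r2 -> path r x s -> path r y r2.
Proof.
case: r1 => [|z r1] /= [-> ->] //.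
by rewrite cat_path => /andP [_ /= /andP [_ ->]].
Qed.

Lemma exists_leaf U : connU U -> 1 < #|U| -> exists v, leaf U v.
Proof.
move=> hc /card_gt1P [x [y [xU yU xy]]].
have /connectP [p pp yl] := hc x y xU yU.
case: p pp yl => [|z p] /=; first by move=> _ yx; rewrite yx eqxx in xy.
case/andP=> exz _ _.
have zx : x != z by apply: contraTneq (eU_e exz) => ->; rewrite eirr.
have [|||p' [pp up hm]] := @max_path U #|T| x [:: z] _ _ _.
- exact: leq_subr.
- by rewrite /= exz.
- by rewrite /= inE zx.
move: pp up hm; rewrite cat1s lastI.
set q1 := belast z p'; set v := last z p'.
rewrite -rcons_cons rcons_path last_rcons => /andP [pq1 /and3P [uU vU euv]] up hm.
exists v; rewrite /leaf vU /=; apply/cards1P; exists (last x q1).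
apply/setP => t; rewrite !inE; apply/idP/idP; last by move/eqP ->; rewrite uU eS.
case/andP => tU evt; apply/negPn/negP => tu.
have := hm t; rewrite /eU vU tU evt => /(_ isT); rewrite mem_rcons inE.
case/orP => [/eqP tv|tin]; first by move: evt; rewrite tv eirr.
have [r1 [r2 E]] : exists r1 r2, x :: q1 = r1 ++ t :: r2.
  by case/splitPr: tin => r1 r2; exists r1, r2.
have hu : last x q1 = last t r2.
  by have := congr1 (last x) E; rewrite /= last_cat.
have r2n : r2 != [::] by apply: contraNneq tu => r2n; rewrite hu r2n.
have cyc : cycle e (t :: rcons r2 v).
  rewrite /cycle rcons_path last_rcons evt andbT.
  apply: (sub_path (@eU_e U)).
  apply: (path_suffix (x := x) (s := rcons q1 v) (r1 := r1)); last by rewrite rcons_path pq1 /eU uU vU euv.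
  by rewrite -rcons_cons E rcons_cat.
have un : uniq (t :: rcons r2 v).
  by move: up; rewrite E rcons_cat cat_uniq => /and3P [].
have sz : 2 < size (t :: rcons r2 v) by rewrite /= size_rcons; case: r2 {hu E cyc un} r2n.
by move: (acyc un sz); rewrite cyc.
Qed.

Lemma adj_leaves U a b : connU U -> leaf U a -> leaf U b -> e a b -> U \subset [set a; b].
Proof.
move=> hc la lb eab.
have [wa [ha _ _ _]] := leafE la; have [wb [hb _ _ _]] := leafE lb.
have aU : a \in U by case/andP: la.
have bU : b \in U by case/andP: lb.
have H : forall p x, x \in [set a; b] -> path (eU U) x p -> last x p \in [set a; b].
  elim=> // z p IH x hx /= /andP [/and3P [xU zU exz] pp]; apply: IH pp.
  move: hx; rewrite !inE => /orP [] /eqP xe; subst x.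
  + move: exz; rewrite (nb_eq ha zU) => /eqP ->; move: eab; rewrite (nb_eq ha bU) => /eqP <-.
    by rewrite eqxx orbT.
  + move: exz; rewrite (nb_eq hb zU) => /eqP ->; move: eab; rewrite eS (nb_eq hb aU) => /eqP <-.
    by rewrite eqxx.
apply/subsetP => y yU; have /connectP [p pp ->] := hc a y aU yU.
by apply: H pp; rewrite !inE eqxx.
Qed.


Definition pe (U : {set T}) (s : seq T) := [/\ uniq s, U = [set x in s] &
  {in s &, forall x y : T, e x y = ((index x s).+1 == index y s) || ((index y s).+1 == index x s)}].

Lemma pe_card U s : pe U s -> #|U| = size s.
Proof. by case=> us -> _; rewrite cardsE; apply/card_uniqP. Qed.

Lemma index_rev (x : T) (s : seq T) : uniq s -> x \in s -> index x (rev s) = size s - (index x s).+1.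
Proof.
move=> us xs.
have hi : index x s < size s by rewrite index_mem.
have E : nth x (rev s) (size s - (index x s).+1) = x.
  rewrite nth_rev; last by lia.
  by rewrite (_ : size s - (size s - (index x s).+1).+1 = index x s) ?nth_index //; lia.
rewrite -{1}E index_uniq ?rev_uniq ?size_rev //; move: hi; set k := index x s; set n := size s. lia.
Qed.

Lemma pe_rev U s : pe U s -> pe U (rev s).
Proof.
case=> us hU ha; split; first by rewrite rev_uniq.
  by rewrite hU; apply/setP => z; rewrite !inE mem_rev.
move=> x y; rewrite !mem_rev => xs ys; rewrite ha // !index_rev //.
have := index_mem x s; have := index_mem y s; rewrite xs ys => hy hx.
move: hx hy; set n := size s; set i := index x s; set j := index y s => hx hy.
by apply/orP/orP => [[/eqP h|/eqP h]|[/eqP h|/eqP h]]; [right|left|right|left]; apply/eqP; lia.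
Qed.

Lemma pe_cons U x h s : pe U [:: x, h & s] -> [/\ nb U x = [set h], leaf U x & pe (U :\ x) (h :: s)].
Proof.
case=> un hU ha.
have xn : x \notin h :: s by case/andP: un.
have hnb : nb U x = [set h].
  apply/setP => y; rewrite !inE hU inE.
  case: (boolP (y \in [:: x, h & s])) => yin /=.
  - rewrite ha ?mem_head // /= eqxx.
    case: (x =P y) => [<-|/eqP xy] /=.
    + by apply/esym/negbTE; apply: contraNneq xn => ->; rewrite mem_head.
    + by case: (h =P y) => [->|/eqP hy]; rewrite ?eqxx //= [y == h]eq_sym (negbTE hy).
  - by apply/esym/negbTE; apply: contraNneq yin => ->; rewrite !inE eqxx orbT.
have xU : x \in U by rewrite hU inE mem_head.
split => //; first by rewrite /leaf xU hnb cards1.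
split; first by case/andP: un.
  apply/setP => y; rewrite !inE hU !inE.
  by case: (y =P x) => [->|_] //=; move: xn; rewrite inE => /negbTE ->.
move=> y z ys zs.
have ys' : y \in [:: x, h & s] by rewrite inE ys orbT.
have zs' : z \in [:: x, h & s] by rewrite inE zs orbT.
rewrite ha //=.
have -> : (x == y) = false by apply/negbTE; apply: contraNneq xn => ->.
have -> : (x == z) = false by apply/negbTE; apply: contraNneq xn => ->.
by rewrite !eqSS.
Qed.

Lemma pe_ext U v w s : pe (U :\ v) (w :: s) -> v \in U -> nb U v = [set w] -> pe U [:: v, w & s].
Proof.
case=> un hU ha vU hnb.
have vn : v \notin w :: s.
  apply/negP => vin. have : v \in U :\ v. rewrite hU inE. exact: vin. by rewrite !inE eqxx.
have sU : forall y, y \in w :: s -> y \in U.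
  move=> y yin; have : y \in U :\ v by rewrite hU inE.
  by rewrite inE => /andP [].
split; first by rewrite cons_uniq vn.
  apply/setP => y; rewrite inE.
  case: (y =P v) => [->|/eqP yv]; first by rewrite vU mem_head.
  have := congr1 (fun S : {set T} => y \in S) hU; rewrite /= !inE yv /= => ->.
  by rewrite (negbTE yv).
have ix : forall y, y \in w :: s -> index y [:: v, w & s] = (index y (w :: s)).+1.
  move=> y yin; rewrite /index /= -/(index y (w :: s)).
  by have -> : (v == y) = false by apply/negbTE; apply: contraNneq vn => ->.
have iv : index v [:: v, w & s] = 0 by rewrite /= eqxx.
have key : forall z, z \in w :: s -> e v z = ((index v [:: v, w & s]).+1 == index z [:: v, w & s]) ||
        ((index z [:: v, w & s]).+1 == index v [:: v, w & s]).
  move=> z zin; rewrite iv ix // (nb_eq hnb (sU _ zin)) orbF eqSS.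
  by rewrite /index /= -/(index z s); case: (w =P z) => [->|/eqP wz]; rewrite ?eqxx // eq_sym (negbTE wz).
move=> y z; rewrite inE => /orP [/eqP ->|yin]; rewrite inE => /orP [/eqP ->|zin].
- by rewrite eirr iv.
- exact: key.
- by rewrite eS key // orbC.
- by rewrite ha // !ix.
Qed.

Lemma nb_del (U : {set T}) v x : ~~ e x v -> nb (U :\ v) x = nb U x.
Proof.
move=> hx; apply/setP => y; rewrite !inE.
by case: (y =P v) => [->|] //=; rewrite (negbTE hx) andbF.
Qed.

Lemma leaf_up (U : {set T}) v t : leaf (U :\ v) t -> ~~ e t v -> leaf U t.
Proof. by case/andP; rewrite inE => /andP [_ tU] hl hx; rewrite /leaf tU -(nb_del U hx) hl. Qed.

Definition three_leaves U := exists a b c, [/\ leaf U a, leaf U b, leaf U c & [&& a != b, a != c & b != c]].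

Lemma structure : forall n (U : {set T}), #|U| = n -> 0 < n -> connU U -> (exists s, pe U s) \/ three_leaves U.
Proof.
elim=> // n IH U hn _ hc.
case: n IH hn => [|n] IH hn.
  have [x hx] : exists x, U = [set x] by apply/cards1P; rewrite hn.
  left; exists [:: x]; split => //; first by rewrite hx; apply/setP => y; rewrite !inE.
  by move=> y z; rewrite !inE => /eqP -> /eqP ->; rewrite eirr /= eqxx.
have [v lv] : exists v, leaf U v by apply: exists_leaf hc _; rewrite hn.
have [w [hw wU evw wv]] := leafE lv.
have vU : v \in U by case/andP: lv.
have hc' := leaf_conn hc lv.
have hn' : #|U :\ v| = n.+1 by move: hn; rewrite (cardsD1 v U) vU; lia.
have wU' : w \in U :\ v by rewrite !inE wv wU.
have notev : forall t, t \in U -> t != w -> ~~ e t v.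
  by move=> t tU tw; rewrite eS (nb_eq hw tU).
case: (IH (U :\ v) hn' isT hc') => [[s hs]|[a [b [c [la lb lc /and3P [ab ac bc]]]]]].
- have ws : w \in s by case: hs => _ hU _; move: wU'; rewrite hU inE.
  have claim : forall s', pe (U :\ v) s' -> index w s' = 0 -> exists s, pe U s.
    move=> [|h s'] hs' i0; first by case: hs' => _ hU _; move: wU'; rewrite hU inE.
    exists [:: v, h & s']; apply: pe_ext => //.
    by move: i0; rewrite /index /=; case: (h =P w) => [->|].
  have claim2 : forall s', pe (U :\ v) s' -> forall x h s'', s' = [:: x, h & s''] -> x != w -> leaf U x.
    move=> s' hs' x h s'' E xw; subst s'.
    have [_ lx _] := pe_cons hs'.
    have xU : x \in U by case/andP: lx; rewrite inE => /andP [].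
    exact: (leaf_up lx (notev x xU xw)).
  case: (boolP (index w s == 0)) => [/eqP i0|i0]; first by left; exact: claim i0.
  case: (boolP (index w s == (size s).-1)) => [/eqP il|il].
    left; apply: claim (pe_rev hs) _.
    case: hs => us _ _; rewrite index_rev // il.
    by have := index_mem w s; rewrite ws; lia.
  have hsz : 2 < size s.
    by have := index_mem w s; rewrite ws; move: i0 il; set nn := size s; set k := index w s; lia.
  right.
  case: s hs ws i0 il hsz => [|x [|h s]] // hs ws i0 il _.
  have xw : x != w by apply: contraNneq i0 => ->; rewrite /= eqxx.
  have lx := claim2 _ hs x h s erefl xw.
  have hr := pe_rev hs.
  case E : (rev [:: x, h & s]) => [|y [|h' s']]; first by move: (congr1 size E); rewrite size_rev.
    by move: (congr1 size E); rewrite size_rev.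
  have yE : nth x [:: x, h & s] (size [:: x, h & s] - 1) = y.
    by have := congr1 (fun l => nth x l 0) E; rewrite nth_rev.
  have us : uniq [:: x, h & s] by case: hs.
  have iy : index y [:: x, h & s] = size [:: x, h & s] - 1.
    by rewrite -yE index_uniq //= subn1.
  have yw : y != w by apply: contraNneq il => <-; rewrite iy subn1.
  have ly := claim2 _ hr y h' s' E yw.
  have Lv : forall z, z \in [:: x, h & s] -> z != v.
    move=> z zin; apply: contraTneq zin => ->; apply/negP => vin.
    have : v \in U :\ v by case: hs => _ -> _; rewrite inE.
    by rewrite !inE eqxx.
  have yin : y \in [:: x, h & s] by rewrite -mem_rev E mem_head.
  exists x, y, v; split => //; apply/and3P; split.
  + by apply/negP => /eqP xy; move: iy; rewrite -xy /= eqxx.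
  + by apply: Lv; rewrite mem_head.
  + exact: Lv.
- have lv' : forall t, leaf (U :\ v) t -> t != w -> leaf U t.
    move=> t lt tw; have tU : t \in U by case/andP: lt; rewrite inE => /andP [].
    exact: (leaf_up lt (notev t tU tw)).
  have nv : forall t, leaf (U :\ v) t -> t != v.
    by move=> t /andP [+ _]; rewrite !inE => /andP [].
  right; case: (a =P w) => [aw|/eqP aw].
    exists b, c, v; split; [apply: lv'|apply: lv'|exact: lv|] => //.
    + by rewrite -aw eq_sym.
    + by rewrite -aw eq_sym.
    + by rewrite bc nv // nv.
  case: (b =P w) => [bw|/eqP bw].
    exists a, c, v; split; [apply: lv'|apply: lv'|exact: lv|] => //.
    + by rewrite -bw eq_sym.
    + by rewrite ac nv // nv.
  exists a, b, v; split; [apply: lv'|apply: lv'|exact: lv|] => //.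
  by rewrite ab nv // nv.
Qed.

Definition cV (l : T -> A) (U : {set T}) (a : A) : nat := #|[set v in U | l v == a]|.
Definition EU (U : {set T}) : {set {set T}} := [set E in edges e | E \subset U].
Definition labE (l : T -> A) (a : A) (E : {set T}) : bool :=
  [exists x, exists y, [&& e x y, E == [set x; y] & (l x + l y == a)%R]].
Definition cE (l : T -> A) (U : {set T}) (a : A) : nat := #|[set E in EU U | labE l a E]|.

Lemma sub2 (x y : T) (U : {set T}) : ([set x; y] \subset U) = (x \in U) && (y \in U).
Proof. by rewrite subUset !sub1set. Qed.

Lemma labE_pair l a x y : e x y -> labE l a [set x; y] = (l x + l y == a)%R.
Proof.
move=> exy; apply/existsP/idP => [[x' /existsP [y' /and3P [exy' /eqP E s]]]|h].
- have hx' : x' \in [set x; y] by rewrite E !inE eqxx.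
  have hy' : y' \in [set x; y] by rewrite E !inE eqxx orbT.
  move: hx' hy' s; rewrite !inE => /orP [] /eqP hx /orP [] /eqP hy; subst x' y';
    rewrite ?eirr // in exy'; by rewrite addrC.
- by exists x; apply/existsP; exists y; rewrite exy eqxx h.
Qed.

Lemma cV_leaf l (U : {set T}) v a : v \in U -> cV l U a = cV l (U :\ v) a + (l v == a).
Proof.
move=> vU; rewrite /cV (cardsD1 v) inE vU /= addnC; congr (_ + _).
by apply: eq_card => x; rewrite !inE andbA.
Qed.

Lemma cE_leaf l (U : {set T}) v w a : v \in U -> nb U v = [set w] ->
  cE l U a = cE l (U :\ v) a + (l v + l w == a)%R.
Proof.
move=> vU hw.
have [wU evw] : w \in U /\ e v w.
  have : w \in nb U v by rewrite hw set11.
  by rewrite inE => /andP [].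
rewrite /cE (cardsD1 [set v; w]) addnC; congr (_ + _).
- apply: eq_card => E; rewrite !inE.
  case: existsP => [[x /existsP [y /andP [exy /eqP ->]]]|_] /=; last by rewrite andbF.
  rewrite !sub2 !inE.
  case: (x =P v) => [xv|/eqP xv]; first subst x.
    case: (boolP (y \in U)) => yU; rewrite ?andbF //=.
    by rewrite (nb_eq hw yU) in exy; rewrite (eqP exy) eqxx.
  case: (y =P v) => [yv|/eqP yv]; first subst y.
    case: (boolP (x \in U)) => xU; rewrite ?andbF //=.
    by rewrite eS (nb_eq hw xU) in exy; rewrite (eqP exy) setUC eqxx.
  have -> : ([set x; y] != [set v; w]) = true.
    apply/negP => /eqP E2; have : v \in [set x; y] by rewrite E2 !inE eqxx.
    by rewrite !inE [v == x]eq_sym [v == y]eq_sym (negbTE xv) (negbTE yv).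
  by [].
- have fe : [set v; w] \in edges e.
    by rewrite inE; apply/existsP; exists v; apply/existsP; exists w; rewrite evw eqxx.
  by rewrite inE [_ \in EU U]inE fe sub2 vU wU labE_pair.
Qed.

Lemma cV_loc l l' (U : {set T}) a : {in U, l =1 l'} -> cV l U a = cV l' U a.
Proof.
move=> h; apply: eq_card => x; rewrite !inE.
by case: (boolP (x \in U)) => //= xU; rewrite h.
Qed.

Lemma cE_loc l l' (U : {set T}) a : {in U, l =1 l'} -> cE l U a = cE l' U a.
Proof.
move=> h; apply: eq_card => E; rewrite !inE.
case: (boolP (E \subset U)) => sEU; rewrite ?andbF ?andbT //=.
have hin : forall x y, E = [set x; y] -> x \in U /\ y \in U.
  by move=> x y hE; move: sEU; rewrite hE sub2 => /andP [].
have -> : labE l a E = labE l' a E.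
  apply/existsP/existsP => [[x /existsP [y /and3P [exy /eqP hE s]]]|[x /existsP [y /and3P [exy /eqP hE s]]]];
    exists x; apply/existsP; exists y; rewrite exy hE eqxx /=; have [xU yU] := hin x y hE.
  - by rewrite -!h.
  - by rewrite !h.
by [].
Qed.

Lemma cV1 l x a : cV l [set x] a = (l x == a).
Proof.
rewrite /cV; case: (l x =P a) => h.
- rewrite (_ : [set v in [set x] | l v == a] = [set x]) ?cards1 //.
  by apply/setP => y; rewrite !inE; case: (y =P x) => [->|] //=; rewrite h eqxx.
- rewrite (_ : [set v in [set x] | l v == a] = set0) ?cards0 //.
  by apply/setP => y; rewrite !inE; case: (y =P x) => [->|] //=; apply/negP => /eqP.
Qed.

Lemma cE1 l x a : cE l [set x] a = 0.
Proof.
apply/eqP; rewrite cards_eq0; apply/eqP/setP => E; rewrite !inE.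
apply: negbTE; apply/negP => /andP [/andP [/existsP [y /existsP [z /andP [eyz /eqP ->]]]]].
by rewrite sub2 !inE => /andP [/eqP hy /eqP hz] _; rewrite hy hz eirr in eyz.
Qed.

Lemma sum_ind (c : A) : \sum_(a : A) ((c == a) : nat) = 1.
Proof. by rewrite (bigD1 c) //= eqxx big1 // => a /negbTE; rewrite eq_sym => ->. Qed.

Lemma sums l : forall n (U : {set T}), #|U| = n.+1 -> connU U ->
  \sum_(a : A) cV l U a = n.+1 /\ \sum_(a : A) cE l U a = n.
Proof.
elim=> [|n IH] U hn hc.
- have [x hx] : exists x, U = [set x] by apply/cards1P; rewrite hn.
  subst U; split.
  + by under eq_bigr => a _ do rewrite cV1; rewrite sum_ind.
  + by rewrite big1 // => a _; rewrite cE1.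
- have [v lv] : exists v, leaf U v by apply: exists_leaf hc _; rewrite hn.
  have [w [hw wU evw wv]] := leafE lv.
  have vU : v \in U by case/andP: lv.
  have hn' : #|U :\ v| = n.+1 by move: hn; rewrite (cardsD1 v U) vU; lia.
  have [h1 h2] := IH _ hn' (leaf_conn hc lv).
  split.
  + under eq_bigr => a _ do rewrite (cV_leaf l a vU).
    by rewrite big_split /= h1 sum_ind addn1.
  + under eq_bigr => a _ do rewrite (cE_leaf l a vU hw).
    by rewrite big_split /= h2 sum_ind addn1.
Qed.

Lemma not_adj (U : {set T}) a b : connU U -> leaf U a -> leaf U b -> 2 < #|U| -> ~~ e a b.
Proof.
move=> hc la lb h; apply/negP => eab.
have := subset_leq_card (adj_leaves hc la lb eab); rewrite cards2.
by move: h; case: (a == b); move: #|U| => k; lia.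
Qed.

Lemma pcount l : forall (s : seq T) (U : {set T}), pe U s -> s != [::] ->
  forall a, cV l U a = cntl (map l s) a /\ cE l U a = cntl (pel (map l s)) a.
Proof.
elim=> // x [|h s] IH U hs _ a.
- have -> : U = [set x] by case: hs => _ -> _; apply/setP => y; rewrite !inE.
  by rewrite cV1 cE1 /cntl /= addn0.
- have [hnb lx hs'] := pe_cons hs.
  have xU : x \in U by case/andP: lx.
  have [h1 h2] := IH _ hs' isT a.
  rewrite (cV_leaf l a xU) (cE_leaf l a xU hnb) h1 h2 /cntl /= addnC; split => //.
  by rewrite addnC.
Qed.

Lemma map_nth_index (Ls : seq A) (s : seq T) : uniq s -> size Ls = size s ->
  map (fun z => nth k0 Ls (index z s)) s = Ls.
Proof.
case: s => [|x0 s] us hs; first by case: Ls hs.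
apply: (@eq_from_nth _ k0); first by rewrite size_map.
move=> i; rewrite size_map => hi.
by rewrite (nth_map x0) // index_uniq.
Qed.

Definition good (U : {set T}) := exists l : T -> A, bal (cV l U) /\ bal (cE l U).

Lemma good1 x : good [set x].
Proof.
exists (fun _ => k0); split => a b; rewrite ?cV1 ?cE1 //.
by case: (k0 == a); rewrite addn1.
Qed.

Lemma leaf_down (U : {set T}) a b : leaf U b -> b != a -> ~~ e b a ->
  leaf (U :\ a) b /\ nb (U :\ a) b = nb U b.
Proof.
move=> lb ba nab; have hnb := nb_del U nab; split => //.
by case/andP: lb => bU hl; rewrite /leaf !inE ba bU hnb hl.
Qed.

Lemma ar1 n : n.+2 %% 4 != 0 -> n.+1 %% 4 != 3. Proof. lia. Qed.
Lemma ar2 m : (m + 6) %% 4 == 0 -> m.+1 %% 4 = 3 /\ ~~ ((m.+1 == 4) || (m.+1 == 5)). Proof. lia. Qed.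
Lemma ar3 k : (k + 4) %% 4 == 0 -> k.+1 %% 4 = 1 /\ (k.+1 != 4). Proof. lia. Qed.

Lemma main : forall n (U : {set T}), #|U| = n.+1 -> connU U ->
  ((n.+1 == 4) || (n.+1 == 5) -> forall s, ~ pe U s) -> good U.
Proof.
elim/ltn_ind => n IH U hU hc hex.
case: n IH hU hex => [|n] IH hU hex.
  have [x ->] : exists x, U = [set x] by apply/cards1P; rewrite hU.
  exact: good1.
case: (boolP (n.+2 %% 4 == 0)) => h4.
- have [[s hs]|[a [b [c [la lb lc /and3P [ab ac bc]]]]]] := structure hU isT hc.
  +
    have hsz := pe_card hs; rewrite hU in hsz.
    have n4 : n.+2 != 4 by apply/negP => /eqP h; apply: (hex _ s hs); rewrite h.
    case: s hs hsz => [|x1 [|x2 [|x3 [|x4 [|x5 [|x6 s']]]]]] hs hsz //;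
      try by move: h4 n4; rewrite hsz.
    have [nb1 l1 hs1] := pe_cons hs.
    have [nb2 l2 hs2] := pe_cons hs1.
    have [nb3 l3 hs3] := pe_cons hs2.
    have [nb4 l4 hs4] := pe_cons hs3.
    have [nb5 l5 hs5] := pe_cons hs4.
    have hc5 := leaf_conn (leaf_conn (leaf_conn (leaf_conn (leaf_conn hc l1) l2) l3) l4) l5.
    set U5 := U :\ x1 :\ x2 :\ x3 :\ x4 :\ x5 in hs5 hc5.
    have hU5 : #|U5| = (size s').+1 by rewrite (pe_card hs5).
    have hm : (size s' + 6) %% 4 == 0 by move: h4; rewrite hsz /= !addnS addn0.
    have [hm3 hm45] := ar2 hm.
    have hex5 : ((size s').+1 == 4) || ((size s').+1 == 5) -> forall s, ~ pe U5 s.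
      by move=> h; rewrite h in hm45.
    have hlt : size s' < n.+1 by move: hsz => /= [->]; lia.
    have [l0 [b1 b2]] := IH _ hlt U5 hU5 hc5 hex5.
    have [s1 s2] := sums l0 hU5 hc5.
    have [y1 [y2 [y3 [y4 [y5 [bx1 bx2]]]]]] := E5 b1 b2 s1 s2 hm3 (l0 x6).
    have us : uniq [:: x1, x2, x3, x4, x5, x6 & s'] by case: hs.
    move: (us) => /= /and5P [u1 u2 u3 u4 u5].
    rewrite !inE !negb_or in u1 u2 u3 u4 u5.
    case/and5P: u1 => n12 n13 n14 n15 /andP [n16 _].
    case/and4P: u2 => n23 n24 n25 /andP [n26 _].
    case/and3P: u3 => n34 n35 /andP [n36 _].
    case/andP: u4 => n45 /andP [n46 _].
    case/andP: u5 => /andP [n56 _] _.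
    pose l := fun z => if z == x1 then y1 else if z == x2 then y2 else if z == x3 then y3
                       else if z == x4 then y4 else if z == x5 then y5 else l0 z.
    have e1 : l x1 = y1 by rewrite /l eqxx.
    have e2 : l x2 = y2 by rewrite /l eqxx eq_sym (negbTE n12).
    have e3 : l x3 = y3 by rewrite /l eqxx eq_sym (negbTE n13) eq_sym (negbTE n23).
    have e4 : l x4 = y4.
      by rewrite /l eqxx eq_sym (negbTE n14) eq_sym (negbTE n24) eq_sym (negbTE n34).
    have e5 : l x5 = y5.
      by rewrite /l eqxx eq_sym (negbTE n15) eq_sym (negbTE n25) eq_sym (negbTE n35) eq_sym (negbTE n45).
    have e6 : l x6 = l0 x6.
      by rewrite /l eq_sym (negbTE n16) eq_sym (negbTE n26) eq_sym (negbTE n36) eq_sym (negbTE n46)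
        eq_sym (negbTE n56).
    have hloc : {in U5, l =1 l0}.
      move=> z; rewrite /U5 !inE => /and5P [z5 z4 z3 z2 /andP [z1 _]].
      by rewrite /l (negbTE z1) (negbTE z2) (negbTE z3) (negbTE z4) (negbTE z5).
    have m1 : x1 \in U by case/andP: l1.
    have m2 : x2 \in U :\ x1 by case/andP: l2.
    have m3 : x3 \in U :\ x1 :\ x2 by case/andP: l3.
    have m4 : x4 \in U :\ x1 :\ x2 :\ x3 by case/andP: l4.
    have m5 : x5 \in U :\ x1 :\ x2 :\ x3 :\ x4 by case/andP: l5.
    exists l; split.
    * apply: (bal_ext _ bx1) => t.
      rewrite (cV_leaf _ t m1) (cV_leaf _ t m2) (cV_leaf _ t m3) (cV_leaf _ t m4) (cV_leaf _ t m5).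
      by rewrite -/U5 (cV_loc t hloc) e1 e2 e3 e4 e5.
    * apply: (bal_ext _ bx2) => t.
      rewrite (cE_leaf _ t m1 nb1) (cE_leaf _ t m2 nb2) (cE_leaf _ t m3 nb3) (cE_leaf _ t m4 nb4)
        (cE_leaf _ t m5 nb5).
      by rewrite -/U5 (cE_loc t hloc) e1 e2 e3 e4 e5 e6.
  +
    case: n IH hU hex h4 => [|[|k]] IH hU hex h4 //.
    have h2U : 2 < #|U| by rewrite hU.
    have aU : a \in U by case/andP: la.
    have bU : b \in U by case/andP: lb.
    have cU : c \in U by case/andP: lc.
    have nab : ~~ e a b := not_adj hc la lb h2U.
    have nac : ~~ e a c := not_adj hc la lc h2U.
    have nbc : ~~ e b c := not_adj hc lb lc h2U.
    have nba : ~~ e b a by rewrite eS.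
    have nca : ~~ e c a by rewrite eS.
    have ncb : ~~ e c b by rewrite eS.
    have [wa [hwa waU ewa waa]] := leafE la.
    have [wb [hwb wbU ewb wbb]] := leafE lb.
    have [wc [hwc wcU ewc wcc]] := leafE lc.
    have neq : forall x y z, e x y -> ~~ e x z -> y != z.
      by move=> x y z exy nxz; apply: contraNneq nxz => <-.
    have ba : b != a by rewrite eq_sym.
    have ca : c != a by rewrite eq_sym.
    have cb : c != b by rewrite eq_sym.
    have [lb1 nbb1] := leaf_down lb ba nba.
    have [lc1 ncc1] := leaf_down lc ca nca.
    have [lc2 ncc2] := leaf_down lc1 cb ncb.
    rewrite hwb in nbb1; rewrite ncc1 hwc in ncc2.
    have hc3 := leaf_conn (leaf_conn (leaf_conn hc la) lb1) lc2.
    set U3 := U :\ a :\ b :\ c in hc3.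
    have bU1 : b \in U :\ a by case/andP: lb1.
    have cU2 : c \in U :\ a :\ b by case/andP: lc2.
    have hU3 : #|U3| = k.+1.
      move: hU; rewrite (cardsD1 a U) aU (cardsD1 b (U :\ a)) bU1 (cardsD1 c (U :\ a :\ b)) cU2.
      by rewrite -/U3 !add1n => [[]].
    have inU3 : forall z, z \in U -> z != a -> z != b -> z != c -> z \in U3.
      by move=> z zU za zb zc; rewrite /U3 !inE za zb zc zU.
    have waU3 : wa \in U3 by apply: inU3 => //; [apply: neq ewa nab | apply: neq ewa nac].
    have wbU3 : wb \in U3 by apply: inU3 => //; [apply: neq ewb nba | apply: neq ewb nbc].
    have wcU3 : wc \in U3 by apply: inU3 => //; [apply: neq ewc nca | apply: neq ewc ncb].
    have notin3 : forall z, z \in U3 -> [&& z != a, z != b & z != c].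
      by move=> z; rewrite /U3 !inE => /and4P [-> -> -> _].
    have hk : (k + 4) %% 4 == 0 by move: h4; rewrite !addnS addn0.
    have [hk1 hk4] := ar3 hk.
    pose lab (x1 x2 x3 : A) (f : T -> A) := fun z => if z == a then x3 else if z == b then x2
                                             else if z == c then x1 else f z.
    have la_ : forall x1 x2 x3 f, lab x1 x2 x3 f a = x3 by move=> *; rewrite /lab eqxx.
    have lb_ : forall x1 x2 x3 f, lab x1 x2 x3 f b = x2.
      by move=> *; rewrite /lab eqxx (negbTE ba).
    have lc_ : forall x1 x2 x3 f, lab x1 x2 x3 f c = x1.
      by move=> *; rewrite /lab eqxx (negbTE ca) (negbTE cb).
    have lo_ : forall x1 x2 x3 f z, z \in U3 -> lab x1 x2 x3 f z = f z.
      by move=> x1 x2 x3 f z /notin3 /and3P [za zb zc]; rewrite /lab (negbTE za) (negbTE zb) (negbTE zc).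
    have cnt : forall x1 x2 x3 f t,
        cV (lab x1 x2 x3 f) U t = cV (lab x1 x2 x3 f) U3 t + (x1 == t) + (x2 == t) + (x3 == t) /\
        cE (lab x1 x2 x3 f) U t = cE (lab x1 x2 x3 f) U3 t + ((x1 + f wc)%R == t)
                                  + ((x2 + f wb)%R == t) + ((x3 + f wa)%R == t).
      move=> x1 x2 x3 f t; split.
      + by rewrite (cV_leaf _ t aU) (cV_leaf _ t bU1) (cV_leaf _ t cU2) la_ lb_ lc_.
      + rewrite (cE_leaf _ t aU hwa) (cE_leaf _ t bU1 nbb1) (cE_leaf _ t cU2 ncc2) la_ lb_ lc_.
        by rewrite !lo_.
    case: (classic (((k.+1 == 4) || (k.+1 == 5)) /\ exists s, pe U3 s)) => [[h45 [s hs]]|hno].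
    * have hsz : size s = 5.
        by rewrite -(pe_card hs) hU3; move: h45; rewrite (negbTE hk4) => /eqP.
      have us : uniq s by case: hs.
      have sU3 : forall z, z \in s -> z \in U3 by case: hs => _ -> _ z; rewrite inE.
      have ii : forall z, z \in U3 -> index z s < 5.
        by move=> z; case: hs => _ -> _; rewrite inE -hsz index_mem.
      have [Ls [x1 [x2 [x3 [hLs bx1 bx2]]]]] := F8 (ii _ wcU3) (ii _ wbU3) (ii _ waU3).
      pose f := fun z => nth k0 Ls (index z s).
      have hmap : map (lab x1 x2 x3 f) s = Ls.
        transitivity (map f s); last by rewrite map_nth_index // hLs hsz.
        by apply/eq_in_map => z zs; rewrite lo_ // sU3.
      have sn : s != [::] by rewrite -size_eq0 hsz.
      exists (lab x1 x2 x3 f); split.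
      + apply: (bal_ext _ bx1) => t.
        by rewrite (cnt x1 x2 x3 f t).1 (pcount _ hs sn t).1 hmap.
      + apply: (bal_ext _ bx2) => t.
        by rewrite (cnt x1 x2 x3 f t).2 (pcount _ hs sn t).2 hmap.
    * have hex3 : (k.+1 == 4) || (k.+1 == 5) -> forall s, ~ pe U3 s.
        by move=> h s hs; apply: hno; split => //; exists s.
      have hlt : k < k.+3 by apply: leqW; apply: leqW.
      have [l0 [b1 b2]] := IH k hlt U3 hU3 hc3 hex3.
      have [s1 s2] := sums l0 hU3 hc3.
      have [x1 [x2 [x3 [bx1 bx2]]]] := E3 b1 b2 s1 s2 hk1 (l0 wc) (l0 wb) (l0 wa).
      exists (lab x1 x2 x3 l0); split.
      + apply: (bal_ext _ bx1) => t.
        rewrite (cnt x1 x2 x3 l0 t).1; do 3 congr (_ + _).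
        by apply: cV_loc => z /lo_ ->.
      + apply: (bal_ext _ bx2) => t.
        rewrite (cnt x1 x2 x3 l0 t).2; do 3 congr (_ + _).
        by apply: cE_loc => z /lo_ ->.
- have [v lv] : exists v, leaf U v by apply: exists_leaf hc _; rewrite hU.
  have [w [hw wU evw wv]] := leafE lv.
  have vU : v \in U by case/andP: lv.
  have hU' : #|U :\ v| = n.+1 by move: hU; rewrite (cardsD1 v U) vU; move: #|U :\ v| => k; lia.
  have hc' : connU (U :\ v) := leaf_conn hc lv.
  have wU' : w \in U :\ v by rewrite !inE wv wU.
  case: (classic (((n.+1 == 4) || (n.+1 == 5)) /\ exists s, pe (U :\ v) s)) => [[h45 [s hs]]|hno].
  + have hsz : size s = n.+1 by rewrite -(pe_card hs).
    have ws : w \in s by case: hs => _ hU'' _; move: wU'; rewrite hU'' inE.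
    have us : uniq s by case: hs.
    have vs : v \notin s.
      apply/negP => vin; have : v \in U :\ v by case: hs => _ -> _; rewrite inE.
      by rewrite !inE eqxx.
    have hi : index w s < n.+1 by rewrite -hsz index_mem.
    have claim : forall s', pe (U :\ v) s' -> index w s' = 0 -> n.+1 = 4 -> False.
      move=> [|h s'] hs' i0 h4'; first by case: hs' => _ hU'' _; move: wU'; rewrite hU'' inE.
      have hw' : nb U v = [set h] by move: i0; rewrite /index /=; case: (h =P w) => [->|].
      by apply: (hex _ _ (pe_ext hs' vU hw')); rewrite h4'.
    have hcond : ((n.+1 == 4) && ((index w s == 1) || (index w s == 2))) ||
                 ((n.+1 == 5) && (index w s < 5)).
      case/orP: h45 => /eqP h; rewrite h ?eqxx /=; last by rewrite -h.
      move: hi; rewrite h; case: (index w s =P 0) => [i0|/eqP i0]; first by case: (claim _ hs i0 h).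
      case: (index w s =P 3) => [i3|/eqP i3].
        case: (claim _ (pe_rev hs) _ h).
        by rewrite index_rev // i3 hsz h.
      by move: i0 i3; case: (index w s) => [|[|[|[|]]]].
    have [Ls [x [hLs bx1 bx2]]] := F56 hcond.
    pose l := fun z => if z == v then x else nth k0 Ls (index z s).
    have hmap : map l s = Ls.
      transitivity (map (fun z => nth k0 Ls (index z s)) s); last by rewrite map_nth_index // hLs hsz.
      apply/eq_in_map => z zs.
      by rewrite /l; case: (z =P v) => // zv; move: vs; rewrite -zv zs.
    have sn : s != [::] by rewrite -size_eq0 hsz.
    exists l; split.
    * apply: (bal_ext _ bx1) => a.
      by rewrite (cV_leaf _ a vU) (pcount l hs sn a).1 hmap /l eqxx.
    * apply: (bal_ext _ bx2) => a.
      by rewrite (cE_leaf _ a vU hw) (pcount l hs sn a).2 hmap /l eqxx (negbTE wv).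
  + have hex' : (n.+1 == 4) || (n.+1 == 5) -> forall s, ~ pe (U :\ v) s.
      by move=> h s hs; apply: hno; split => //; exists s.
    have [l0 [b1 b2]] := IH n (ltnSn n) (U :\ v) hU' hc' hex'.
    have [s1 s2] := sums l0 hU' hc'.
    have [x [bx1 bx2]] := E1 b1 b2 s1 s2 (ltn0Sn _) (ar1 h4) (l0 w).
    exists (fun z => if z == v then x else l0 z); split.
    * apply: (bal_ext _ bx1) => a; rewrite (cV_leaf _ a vU) eqxx; congr (_ + _).
      by apply: cV_loc => z; rewrite !inE => /andP [zv _]; rewrite (negbTE zv).
    * apply: (bal_ext _ bx2) => a; rewrite (cE_leaf _ a vU hw) eqxx (negbTE wv); congr (_ + _).
      by apply: cE_loc => z; rewrite !inE => /andP [zv _]; rewrite (negbTE zv).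
Qed.

Lemma iso_pe n : iso_path e n -> exists s, pe setT s /\ size s = n.
Proof.
case=> f [[g fg gf] hf].
have ginj : injective g by apply: (can_inj gf).
exists (map g (enum 'I_n)); split; last by rewrite size_map size_enum_ord.
have ix : forall x, index x (map g (enum 'I_n)) = f x.
  by move=> x; rewrite -{1}(fg x) index_map // index_enum_ord.
split.
- by rewrite map_inj_uniq // enum_uniq.
- apply/setP => x; rewrite !inE -(fg x); apply/esym/mapP; exists (f x) => //.
  by rewrite mem_enum.
- by move=> x y _ _; rewrite !ix hf.
Qed.

Lemma pe_iso x0 s : pe setT (x0 :: s) -> iso_path e (size (x0 :: s)).
Proof.
case=> us hU ha.
have hx : forall x, index x (x0 :: s) < size (x0 :: s).
  move=> x; rewrite index_mem; have : x \in [set: T] by rewrite inE.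
  by rewrite hU inE.
have hin : forall x, x \in x0 :: s by move=> x; rewrite -index_mem.
exists (fun x => Ordinal (hx x)); split.
- exists (fun i : 'I_(size (x0 :: s)) => nth x0 (x0 :: s) i).
  + by move=> x /=; rewrite nth_index.
  + by move=> i; apply: val_inj; exact: (index_uniq x0 (ltn_ord i) us).
- by move=> x y; rewrite /path_adj /= ha.
Qed.

Lemma fV_cV (l : T -> A) a : fV l a = cV l setT a.
Proof. by apply: eq_card => x; rewrite !inE. Qed.

Lemma fE_cE (l : T -> A) a : fE e l a = cE l setT a.
Proof. by apply: eq_card => E; rewrite !inE subsetT andbT. Qed.

Lemma cordialE : cordial e Klein4 <-> exists l : T -> A, bal (cV l setT) /\ bal (cE l setT).
Proof.
split => [[l [h1 h2]]|[l [h1 h2]]]; exists l; split => a b.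
- by rewrite -!fV_cV; apply: h1.
- by rewrite -!fE_cE; apply: h2.
- by rewrite !fV_cV; apply: h1.
- by rewrite !fE_cE; apply: h2.
Qed.

Lemma final : 0 < #|T| -> connected_graph e ->
  (cordial e Klein4 <-> (~ iso_path e 4 /\ ~ iso_path e 5)).
Proof.
move=> hT hcon.
have hc : connU setT.
  move=> x y _ _; rewrite (@eq_connect _ _ e) //.
  by move=> u v; rewrite /eU !inE.
rewrite cordialE; split.
- move=> [l [b1 b2]].
  have noiso : forall n, (n == 4) || (n == 5) -> ~ iso_path e n.
    move=> n hn /iso_pe [s [hs hsz]].
    have sn : s != [::] by rewrite -size_eq0 hsz; case/orP: hn => /eqP ->.
    apply: (NP hn (_ : size (map l s) = n)); first by rewrite size_map.
    + by move=> a b; rewrite -!(pcount l hs sn _).1; apply: b1.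
    + by move=> a b; rewrite -!(pcount l hs sn _).2; apply: b2.
  by split; apply: noiso.
- move=> [n4 n5].
  case hTn : #|T| => [|n]; first by rewrite hTn in hT.
  apply: (main (n := n)); first by rewrite cardsT.
    exact: hc.
  move=> h45 [|x0 s] hs.
    by have := pe_card hs; rewrite cardsT hTn.
  have := pe_iso hs; rewrite -(pe_card hs) cardsT hTn.
  by case/orP: h45 => /eqP ->.
Qed.

End Graph.


Theorem theorem6p1 (T : finType) (e : rel T) :
  symmetric e -> irreflexive e -> is_tree e ->
  (cordial e Klein4 <-> (~ iso_path e 4 /\ ~ iso_path e 5)).
Proof.
move=> hs hi [hT hc ha].
exact: (final hs hi ha hT hc).
Qed.
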